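(* Let $f:\mathcal{V}\to\mathbb{P}(\mathcal{L})$ be a planar discrete curve that admits an $(\mathfrak{m})$-type Darboux evolution map $\sigma_r$, i.e. there exists a circle congruence $c \in \mathcal{P}^\pm$ evolved by $\sigma_r$ that lies in a linear complex $\overline{\mathfrak{m}}^\perp$ (that is, $\langle \mathfrak{c}_i,\overline{\mathfrak{m}}\rangle=0$ for all $i$, with $\overline{\mathfrak{m}}\in\operatorname{span}\{\mathfrak{m},\mathfrak{p}\}$). Suppose the homogeneous coordinates $\mathfrak{c}_i \in c_i$ satisfy $\langle\mathfrak{c}_i,\mathfrak{p}\rangle=-1$. In the following three cases there are initial points such that this evolution map gives rise to real Darboux transforms: (i) If $\langle\overline{\mathfrak{m}},\overline{\mathfrak{m}}\rangle<0$ and $\langle\overline{\mathfrak{m}},\mathfrak{p}\rangle^2+\langle\overline{\mathfrak{m}},\overline{\mathfrak{m}}\rangle\neq 0$, then there are two $(\mathfrak{m})$-type Darboux transforms $g^\pm$ of $f$, explicitly given by $$\mathfrak{g}_i^\pm=\mathfrak{c}_i+\mu^\pm\overline{\mathfrak{m}}+(\mu^\pm\langle\overline{\mathfrak{m}},\mathfrak{p}\rangle-1)\mathfrak{p},\qquad \mu^\pm:=\frac{\langle\overline{\mathfrak{m}},\mathfrak{p}\rangle\pm\sqrt{-\langle\overline{\mathfrak{m}},\overline{\mathfrak{m}}\rangle}}{\langle\overline{\mathfrak{m}},\mathfrak{p}\rangle^2+\langle\overline{\mathfrak{m}},\overline{\mathfrak{m}}\rangle}.$$ (ii) If $\langle\overline{\mathfrak{m}},\mathfrak{p}\rangle^2+\langle\overline{\mathfrak{m}},\overline{\mathfrak{m}}\rangle=0$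 and $\langle\overline{\mathfrak{m}},\mathfrak{p}\rangle\neq0$, then there exists one Darboux transform $g$ given by $$\mathfrak{g}_i=\mathfrak{c}_i+\frac{1}{2\langle\overline{\mathfrak{m}},\mathfrak{p}\rangle}\overline{\mathfrak{m}}-\frac12\mathfrak{p}.$$ (iii) If $\langle\overline{\mathfrak{m}},\overline{\mathfrak{m}}\rangle=0$ and $\langle\overline{\mathfrak{m}},\mathfrak{p}\rangle\neq0$, then the curve points of the induced Darboux transform $g$ lie on the circle represented by $\overline{\mathfrak{m}}\in\mathbb{P}(\mathcal{L})$ and are given by $$\mathfrak{g}_i=\mathfrak{c}_i+\frac{1}{\langle\overline{\mathfrak{m}},\mathfrak{p}\rangle}\overline{\mathfrak{m}}.$$
   Context: Setting (light cone model of planar Lie/Möbius geometry): $\mathbb{R}^{3,2}$ is a 5-dimensional real vector space with an inner product $\langle\cdot,\cdot\rangle$ of signature $(3,2)$; $\mathbb{P}(\mathcal{L})=\{\mathbb{R}\mathfrak{v}:\langle\mathfrak{v},\mathfrak{v}\rangle=0,\mathfrak{v}\neq0\}$ is the projective light cone, whose elements correspond to points, oriented circles and oriented lines in $\mathbb{R}^2\cup\{\infty\}$. Fraktur letters denote homogeneous coordinates of the corresponding projective elements. The point-sphere complex is $\mathfrak{p}=(0,0,0,0,1)$; $v\in\mathbb{P}(\mathcal{L})$ represents a point iff $\langle\mathfrak{v},\mathfrak{p}\rangle=0$. Two objects are in oriented contact (e.g. a point lies on a circle) iff their inner product vanishes. For $\mathfrak{a}$ with $\langle\mathfrak{a},\mathfrak{a}\rangle\ne0$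 the inversion is $\sigma_a(\mathfrak{s})=\mathfrak{s}-\frac{2\langle\mathfrak{s},\mathfrak{a}\rangle}{\langle\mathfrak{a},\mathfrak{a}\rangle}\mathfrak{a}$; it is an M-inversion (maps points to points) iff $\langle\mathfrak{a},\mathfrak{p}\rangle=0$. A linear complex determined by $\mathfrak{a}$ is the family of circles $s\in\mathbb{P}(\mathcal{L})$ with $\langle\mathfrak{s},\mathfrak{a}\rangle=0$. A planar discrete curve is a map $f:\mathcal{V}\to\mathbb{P}(\mathcal{L})$ into points, on a 1-dimensional connected graph $\mathcal{V}$ (edges $\mathcal{E}$). An evolution map of $f$ is a map $\sigma:\mathcal{E}\to\{\text{M-inversions}\}$ with $\sigma_{ij}(\mathfrak{f}_i)=\mathfrak{f}_j$; for any initial point $g_0$, the iteratively defined curve $\mathfrak{g}_j:=\sigma_{ij}(\mathfrak{g}_i)$ is a (discrete) Ribaucour transform of $f$ (all quadrilaterals $f_i,f_j,g_j,g_i$ are concircular). Such a Ribaucour pair is a Darboux pair ($g$ a Darboux transform of $f$) if the cross-ratios of all its circular faces are constant. An evolution map is of $(\mathfrak{m})$-type if every element of $\operatorname{span}\{\mathfrak{m},\mathfrak{p}\}$ is a fixed point of all its inversions. For each vertex $i$, $\mathcal{P}_i^\pm$ is the circle pencil $\operatorname{span}\{\mathfrak{f}_{i-1},\mathfrak{f}_{i+1}\}^\perp\cap\mathcal{L}$ of all oriented circles through $f_{i-1}$ and $f_{i+1}$; a circle congruence $c\in\mathcal{P}^\pm$ assigns to each vertex $i$ a circle $c_i\in\mathcal{P}_i^\pm$.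 An $(\mathfrak{m})$-type Darboux evolution map for $f$ is an $(\mathfrak{m})$-type evolution map of $f$ that evolves some circle congruence $c\in\mathcal{P}^\pm$, i.e. $\sigma_{ij}(\mathfrak{c}_i)=\mathfrak{c}_j$ for homogeneous coordinates with $\langle\mathfrak{c}_i,\mathfrak{p}\rangle=\langle\mathfrak{c}_j,\mathfrak{p}\rangle=-1$; such an evolved congruence lies in a fixed linear complex determined by some $\overline{\mathfrak{m}}=\mathfrak{m}-\xi\mathfrak{p}\in\operatorname{span}\{\mathfrak{m},\mathfrak{p}\}$. *)

(* Defs.v *)
(* Light cone model R^{3,2} of planar Lie/Moebius geometry. *)
From HB Require Import structures.
From mathcomp Require Import all_boot all_order all_algebra.
Set Implicit Arguments. Unset Strict Implicit. Unset Printing Implicit Defensive.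
Import Order.TTheory GRing.Theory Num.Theory.
Local Open Scope ring_scope.

Section LightCone.
Variable R : rcfType.

Notation vec := 'rV[R]_5.

Definition eta (k : 'I_5) : R := if (k < 3)%N then 1 else -1.

Definition lip (u v : vec) : R := \sum_(k < 5) eta k * u 0 k * v 0 k.

(* the point-sphere complex p = (0,0,0,0,1); <p,p> = -1 *)
Definition pt : vec := \row_(k < 5) (if (k == 4 :> nat) then 1 else 0).

Definition sinv (a s : vec) : vec := s - (2 * lip s a / lip a a) *: a.

Definition is_point (v : vec) : Prop := v != 0 /\ lip v v = 0 /\ lip v pt = 0.

(* planar discrete curve on the graph Z (edges {i,i+1}); adjacent vertices
   are distinct points *)
Definition discrete_curve (f : int -> vec) : Prop :=
  (forall i, is_point (f i)) /\ (forall i (t : R), f (i + 1) != t *: f i).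

Definition M_inversion (a : vec) : Prop := lip a a != 0 /\ lip a pt = 0.

Definition evolution_map (f : int -> vec) (a : int -> vec) : Prop :=
  forall i, M_inversion (a i) /\
    exists t : R, t != 0 /\ sinv (a i) (f i) = t *: f (i + 1).

Definition m_type (m : vec) (a : int -> vec) : Prop :=
  forall i (al be : R), sinv (a i) (al *: m + be *: pt) = al *: m + be *: pt.

(* c is an (oriented) circle of the pencil P_i^{+-} through f_{i-1}, f_{i+1} *)
Definition in_pencil (f : int -> vec) (i : int) (c : vec) : Prop :=
  c != 0 /\ lip c c = 0 /\ lip c (f (i - 1)) = 0 /\ lip c (f (i + 1)) = 0.

(* Real cross-ratio of four concircular points a,b,c,d: the (real) complex
   cross-ratio q = (a-b)(c-d)/((b-c)(d-a)); since |q|^2 = N1/D and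
   |1-q|^2 = N2/D with the light-cone inner products below, q = (D+N1-N2)/(2D). *)
Definition cr_D (a b c d : vec) : R := lip b c * lip d a.
Definition cr_N1 (a b c d : vec) : R := lip a b * lip c d.
Definition cr_N2 (a b c d : vec) : R := lip a c * lip b d.
Definition cross_ratio (a b c d : vec) : R :=
  (cr_D a b c d + cr_N1 a b c d - cr_N2 a b c d) / (2 * cr_D a b c d).

(* cross_ratio a b c d = lam, with the denominator cleared *)
Definition cr_is (a b c d : vec) (lam : R) : Prop :=
  cr_D a b c d + cr_N1 a b c d - cr_N2 a b c d = 2 * lam * cr_D a b c d.

Definition ribaucour_via (a : int -> vec) (g : int -> vec) : Prop :=
  (forall i, is_point (g i)) /\ (forall i, g (i + 1) = sinv (a i) (g i)).

Definition darboux_pair (f g : int -> vec) : Prop :=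
  exists lam : R, forall i, cr_is (f i) (f (i + 1)) (g (i + 1)) (g i) lam.

Definition darboux_transform_via (a : int -> vec) (f g : int -> vec) : Prop :=
  ribaucour_via a g /\ darboux_pair f g.

End LightCone.

(* Main.v *)
Require Import Defs.
From HB Require Import structures.
From mathcomp Require Import all_boot all_order all_algebra ring lra zify.
Import Order.TTheory GRing.Theory Num.Theory.
Local Open Scope ring_scope.
Lemma lipDl {R : rcfType} (u v w : 'rV[R]_5) : lip (u + v) w = lip u w + lip v w.
Proof. rewrite /lip -big_split /=; apply: eq_bigr => k _; rewrite !mxE; ring. Qed.
Lemma lipDr {R : rcfType} (u v w : 'rV[R]_5) : lip w (u + v) = lip w u + lip w v.
Proof. rewrite /lip -big_split /=; apply: eq_bigr => k _; rewrite !mxE; ring. Qed.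
Lemma lipZl {R : rcfType} (s : R) (u w : 'rV[R]_5) : lip (s *: u) w = s * lip u w.
Proof. rewrite /lip mulr_sumr; apply: eq_bigr => k _; rewrite !mxE; ring. Qed.
Lemma lipZr {R : rcfType} (s : R) (u w : 'rV[R]_5) : lip w (s *: u) = s * lip w u.
Proof. rewrite /lip mulr_sumr; apply: eq_bigr => k _; rewrite !mxE; ring. Qed.
Lemma lipNl {R : rcfType} (u w : 'rV[R]_5) : lip (- u) w = - lip u w.
Proof. by rewrite -scaleN1r lipZl mulN1r. Qed.
Lemma lipNr {R : rcfType} (u w : 'rV[R]_5) : lip w (- u) = - lip w u.
Proof. by rewrite -scaleN1r lipZr mulN1r. Qed.
Lemma lipC {R : rcfType} (u v : 'rV[R]_5) : lip u v = lip v u.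
Proof. rewrite /lip; apply: eq_bigr => k _; ring. Qed.
Lemma lip0l {R : rcfType} (w : 'rV[R]_5) : lip 0 w = 0.
Proof. by rewrite -(scale0r 0) lipZl mul0r. Qed.
Lemma lippp (R : rcfType) : lip (pt R) (pt R) = -1.
Proof. rewrite /lip !big_ord_recr big_ord0 /= !mxE /Defs.eta /=. ring. Qed.
Local Notation p := (pt _).
Ltac lipexp := rewrite ?(lipDl, lipDr, lipZl, lipZr, lipNl, lipNr).

Lemma step {R : rcfType} (F0 F1 C0 C1 A mb : 'rV[R]_5) (t mu nu lam : R) :
 t != 0 -> lip A A != 0 ->
 sinv A F0 = t *: F1 -> sinv A C0 = C1 ->
 lip A mb = 0 ->
 lip F0 F0 = 0 -> lip F0 p = 0 -> lip F1 p = 0 ->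
 lip C0 p = -1 -> lip C1 p = -1 -> lip C0 mb = 0 -> lip C1 mb = 0 -> lip C0 C0 = 0 ->
 lip C1 F0 = 0 -> lip C0 F1 = 0 ->
 nu = mu * lip mb p - 1 ->
 mu^+2 * (lip mb mb + lip mb p ^+2) - 2 * mu * lip mb p + 1 = 0 ->
 lip F0 C0 * (lip F0 C0 + mu * lip F0 mb) = lam * (lip F0 C0 + mu * lip F0 mb)^+2 ->
 cr_is F0 F1 (C1 + mu *: mb + nu *: p) (C0 + mu *: mb + nu *: p) lam.
Proof.
move=> t0 A0 hF hC hAm hFF hFp hF1p hCp hC1p hCm hC1m hCC hC1F hCF1 hnu quad H.
have eF1 : F1 = t^-1 *: (F0 - (2 * lip F0 A / lip A A) *: A).
  by rewrite -[F0 - _]/(sinv A F0) hF scalerA mulVf // scale1r.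
have eC1 : C1 = C0 - (2 * lip C0 A / lip A A) *: A by rewrite -hC.
have S1 : lip F1 C1 = t^-1 * (lip F0 C0).
  rewrite eF1 eC1; lipexp; rewrite (lipC A C0); field; by rewrite ?t0 ?A0.
have S2 : lip F1 mb = t^-1 * (lip F0 mb).
  rewrite eF1; lipexp; rewrite hAm; ring.
have S3 : lip F0 F1 = t^-1 * (- (2 * (lip F0 A) * (lip F0 A) / (lip A A))).
  rewrite eF1; lipexp; rewrite hFF; field; by rewrite ?t0 ?A0.
have S4 : lip C1 C0 = - (2 * (lip C0 A) * (lip C0 A) / (lip A A)).
  rewrite eC1; lipexp; rewrite hCC (lipC A C0); field; by rewrite ?t0 ?A0.
have X : (lip F0 C0) = 2 * (lip C0 A) * (lip F0 A) / (lip A A).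
  move: hC1F; rewrite eC1; lipexp; rewrite (lipC C0 F0) (lipC A F0).
  by move/eqP; rewrite subr_eq0 => /eqP ->; field; by rewrite ?t0 ?A0.
have Q : mu^+2 * (lip mb mb) + 2 * mu * nu * (lip mb p) - nu^+2 - 2 * nu = 0.
  by rewrite hnu -quad; ring.
have G1 : lip F1 (C1 + mu *: mb + nu *: p) = t^-1 * ((lip F0 C0) + mu * (lip F0 mb)).
  lipexp; rewrite S1 S2 hF1p; ring.
have G2 : lip (C0 + mu *: mb + nu *: p) F0 = (lip F0 C0) + mu * (lip F0 mb).
  lipexp; rewrite (lipC C0 F0) (lipC mb F0) (lipC p F0) hFp; ring.
have G3 : lip (C1 + mu *: mb + nu *: p) (C0 + mu *: mb + nu *: p) = - (2 * (lip C0 A) * (lip C0 A) / (lip A A)).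
  lipexp; rewrite S4 hC1m hC1p (lipC mb C0) (lipC p C0) hCm hCp (lipC p mb) lippp.
  rewrite !mulr0 !addr0 !add0r; apply/eqP; rewrite -subr_eq0; apply/eqP; rewrite -Q; ring.
have G5 : lip F0 (C1 + mu *: mb + nu *: p) = mu * (lip F0 mb).
  lipexp; rewrite (lipC F0 C1) hC1F hFp; ring.
have G6 : lip F1 (C0 + mu *: mb + nu *: p) = mu * (t^-1 * (lip F0 mb)).
  lipexp; rewrite (lipC F1 C0) hCF1 S2 hF1p; ring.
rewrite /cr_is /cr_D /cr_N1 /cr_N2 G1 G2 G3 S3 G5 G6.
have N : t^-1 * (- (2 * (lip F0 A) * (lip F0 A) / (lip A A))) * (- (2 * (lip C0 A) * (lip C0 A) / (lip A A))) = t^-1 * (lip F0 C0)^+2.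
  rewrite X; field; by rewrite ?t0 ?A0.
rewrite N.
apply: (@eq_trans _ _ (2 * t^-1 * ((lip F0 C0) * ((lip F0 C0) + mu * (lip F0 mb))))); first by ring.
rewrite H; ring.
Qed.

Arguments step {R F0 F1 C0 C1 A mb t mu nu lam}.

Lemma int_ind2 (P : int -> Prop) : P 0 -> (forall i, P i -> P (i + 1)) ->
  (forall i, P (i + 1) -> P i) -> forall i, P i.
Proof.
move=> P0 Hf Hb.
have pos : forall n : nat, P n%:Z.
  elim=> // n IH; have -> : (n.+1)%:Z = n%:Z + 1 by lia. exact: Hf.
have neg : forall n : nat, P (- n%:Z).
  elim=> // n IH; apply: Hb; have -> : - (n.+1)%:Z + 1 = - n%:Z by lia. exact IH.
case=> n; first exact: pos.
by rewrite NegzE; apply: neg.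
Qed.

Lemma scal {R : rcfType} (F0 F1 C0 C1 A mb : 'rV[R]_5) (t : R) :
 t != 0 -> lip A A != 0 ->
 sinv A F0 = t *: F1 -> sinv A C0 = C1 -> lip A mb = 0 ->
 lip F1 C1 = t^-1 * lip F0 C0 /\ lip F1 mb = t^-1 * lip F0 mb.
Proof.
move=> t0 A0 hF hC hAm.
have eF1 : F1 = t^-1 *: (F0 - (2 * lip F0 A / lip A A) *: A).
  by rewrite -[F0 - _]/(sinv A F0) hF scalerA mulVf // scale1r.
have eC1 : C1 = C0 - (2 * lip C0 A / lip A A) *: A by rewrite -hC.
split.
  rewrite eF1 eC1; lipexp; rewrite (lipC A C0); field; by rewrite ?t0 ?A0.
rewrite eF1; lipexp; rewrite hAm; ring.
Qed.

Arguments scal {R F0 F1 C0 C1 A mb t}.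

Lemma fix_orth {R : rcfType} (A s : 'rV[R]_5) :
  lip A A != 0 -> sinv A s = s -> lip s A = 0.
Proof.
move=> A0 h; have := congr1 (fun v => lip v A) h; rewrite /sinv /=; lipexp.
move=> e.
have -> : lip s A = - (2^-1) * ((lip s A + - (2 * lip s A / lip A A * lip A A)) - lip s A).
  field; rewrite ?A0 ?andbT //=; by rewrite pnatr_eq0.
by rewrite e subrr mulr0.
Qed.

Lemma sinv_orth {R : rcfType} (A s : 'rV[R]_5) : lip s A = 0 -> sinv A s = s.
Proof. by move=> h; rewrite /sinv h mulr0 mul0r scale0r subr0. Qed.

Lemma sinv_lin (R : rcfType) (A C mb : 'rV[R]_5) (mu nu : R) :
  lip mb A = 0 -> lip (pt R) A = 0 ->
  sinv A (C + mu *: mb + nu *: pt R) = sinv A C + mu *: mb + nu *: pt R.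
Proof.
move=> h1 h2; rewrite /sinv; lipexp; rewrite h1 h2.
apply/rowP => j; rewrite !mxE; ring.
Qed.

Lemma sinv_inv {R : rcfType} (A s : 'rV[R]_5) : lip A A != 0 -> sinv A (sinv A s) = s.
Proof.
move=> A0; rewrite /sinv; lipexp.
apply/rowP => j; rewrite !mxE; field; by rewrite A0.
Qed.

Lemma gnz {R : rcfType} (C mb : 'rV[R]_5) (mu nu : R) :
  lip C C = 0 -> lip C (pt R) = -1 -> lip C mb = 0 ->
  C + mu *: mb + nu *: pt R = 0 -> lip mb mb = 0.
Proof.
move=> hCC hCp hCm h.
have e1 := congr1 (fun v => lip v C) h; have e2 := congr1 (fun v => lip v (pt R)) h.
have e3 := congr1 (fun v => lip v mb) h; move: e1 e2 e3 => /=; lipexp; rewrite !lip0l.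
rewrite hCC (lipC mb C) hCm (lipC (pt R) C) hCp lippp (lipC (pt R) mb).
move=> e1 e2 e3.
have hnu : nu = 0 by lra.
move: e2 e3; rewrite hnu => e2 e3.
have hq : mu * lip mb (pt R) = 1 by lra.
have hM : mu * lip mb mb = 0 by lra.
have -> : lip mb mb = lip mb mb * (mu * lip mb (pt R)) by rewrite hq mulr1.
by rewrite mulrA (mulrC _ mu) hM mul0r.
Qed.

Arguments gnz {R C mb mu nu}.
Arguments fix_orth {R A s}.
Arguments sinv_inv {R A} s.

Lemma lipg {R : rcfType} (C mb : 'rV[R]_5) (mu nu : R) :
  lip (C + mu *: mb + nu *: pt R) mb = lip C mb + mu * lip mb mb + nu * lip (pt R) mb.
Proof. by lipexp. Qed.

Lemma gen (R : rcfType) (f a c g : int -> 'rV[R]_5) (mb : 'rV[R]_5) (mu nu : R) :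
  discrete_curve f -> evolution_map f a ->
  (forall i, sinv (a i) mb = mb) -> (forall i, sinv (a i) (pt R) = pt R) ->
  (forall i, in_pencil f i (c i)) ->
  (forall i, lip (c i) (pt R) = -1) ->
  (forall i, sinv (a i) (c i) = c (i + 1)) ->
  (forall i, lip (c i) mb = 0) ->
  (forall i, g i = c i + mu *: mb + nu *: pt R) ->
  nu = mu * lip mb (pt R) - 1 ->
  mu^+2 * (lip mb mb + lip mb (pt R) ^+2) - 2 * mu * lip mb (pt R) + 1 = 0 ->
  (forall i, g i != 0) ->
  darboux_transform_via a f g.
Proof.
move=> [fpt fne] ha hmb hp hpen hcp hc hcm hg hnu quad hnz.
have hAA i : lip (a i) (a i) != 0 by case: (ha i) => [[]].
have hAm i : lip (a i) mb = 0 by rewrite lipC; apply: fix_orth (hAA i) (hmb i).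
have hAp i : lip (a i) (pt R) = 0 by case: (ha i) => [[]].
split.
  split=> i.
    split; first exact: hnz.
    rewrite hg; split.
      lipexp; rewrite (lipC mb (c i)) (lipC (pt R) (c i)) (lipC (pt R) mb) hcm hcp lippp.
      have [_ [hcc _]] := hpen i; rewrite hcc.
      apply: (etrans _ quad); rewrite hnu; ring.
    lipexp; rewrite hcp lippp hnu; ring.
  by rewrite !hg sinv_lin ?hc // lipC ?hAm ?hAp.
exists (if lip (f 0) (c 0) + mu * lip (f 0) mb == 0 then 0
        else lip (f 0) (c 0) / (lip (f 0) (c 0) + mu * lip (f 0) mb)).
have sc : forall i, exists s : R, s != 0 /\ lip (f i) (c i) = s * lip (f 0) (c 0)
    /\ lip (f i) mb = s * lip (f 0) mb.
  apply: int_ind2.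
  - by exists 1; rewrite oner_eq0 !mul1r.
  - move=> i [s [s0 [e1 e2]]]; have [_ [t [t0 ht]]] := ha i.
    have [S1 S2] := scal t0 (hAA i) ht (hc i) (hAm i).
    exists (t^-1 * s); split; first by rewrite mulf_neq0 ?invr_eq0.
    by rewrite S1 S2 e1 e2 !mulrA.
  - move=> i [s [s0 [e1 e2]]]; have [_ [t [t0 ht]]] := ha i.
    have [S1 S2] := scal t0 (hAA i) ht (hc i) (hAm i).
    exists (t * s); split; first by rewrite mulf_neq0.
    have -> : lip (f i) (c i) = t * (t^-1 * lip (f i) (c i)) by rewrite mulrA mulfV // mul1r.
    have -> : lip (f i) mb = t * (t^-1 * lip (f i) mb) by rewrite mulrA mulfV // mul1r.
    by rewrite -S1 -S2 e1 e2 !mulrA.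
move=> i; have [s [s0 [e1 e2]]] := sc i; have [_ [t [t0 ht]]] := ha i.
have [_ [hff hfp]] := fpt i; have [_ [_ hf1p]] := fpt (i + 1).
have [_ [hcc [_ hcf1]]] := hpen i; have [_ [_ [hc1f _]]] := hpen (i + 1).
move: hc1f; rewrite addrK => hc1f.
rewrite !hg; apply: (step t0 (hAA i) ht (hc i) (hAm i)) => //.
rewrite e1 e2.
have -> : s * lip (f 0) (c 0) + mu * (s * lip (f 0) mb)
    = s * (lip (f 0) (c 0) + mu * lip (f 0) mb) by ring.
case: eqP => hz.
  by rewrite hz; ring.
field; by apply/eqP.
Qed.
Theorem theorem3p9 (R : rcfType) (f a c : int -> 'rV[R]_5) (m : 'rV[R]_5) (xi : R) :
  discrete_curve f ->
  evolution_map f a ->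
  m_type m a ->
  (forall i, in_pencil f i (c i)) ->
  (forall i, lip (c i) (pt R) = -1) ->
  (forall i, sinv (a i) (c i) = c (i + 1)) ->
  (forall i, lip (c i) (m - xi *: pt R) = 0) ->
  let mb := m - xi *: pt R in
  let q := lip mb (pt R) in
  let M := lip mb mb in
  [/\ (* (i) *)
      (M < 0 -> q ^+ 2 + M != 0 ->
       let mup := (q + Num.sqrt (- M)) / (q ^+ 2 + M) in
       let mum := (q - Num.sqrt (- M)) / (q ^+ 2 + M) in
       let gp := fun i => c i + mup *: mb + (mup * q - 1) *: pt R in
       let gm := fun i => c i + mum *: mb + (mum * q - 1) *: pt R in
       [/\ darboux_transform_via a f gp, darboux_transform_via a f gm
         & forall i, gp i != gm i]),
      (* (ii) *)
      (q ^+ 2 + M = 0 -> q != 0 ->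
       darboux_transform_via a f
         (fun i => c i + (2 * q)^-1 *: mb - 2^-1 *: pt R))
    & (* (iii) *)
      (M = 0 -> q != 0 ->
       let g := fun i => c i + q^-1 *: mb in
       (forall i, c i = - (q^-1 *: mb)) \/
       (darboux_transform_via a f g /\ forall i, lip (g i) mb = 0))].
Proof.
move=> hf ha hm hpen hcp hc hcm mb q M.
have hcm' i : lip (c i) mb = 0 := hcm i.
have hmb i : sinv (a i) mb = mb by have := hm i 1 (-xi); rewrite scale1r scaleNr.
have hp i : sinv (a i) (pt R) = pt R by have := hm i 0 1; rewrite scale0r add0r scale1r.
have hAA i : lip (a i) (a i) != 0 by case: (ha i) => [[]].
have hAm i : lip mb (a i) = 0 by apply: fix_orth (hAA i) (hmb i).
have hcc i : lip (c i) (c i) = 0 := (hpen i).2.1.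
have nz mu nu : M != 0 -> forall i, c i + mu *: mb + nu *: pt R != 0.
  move=> M0 i; apply/eqP => /(gnz (hcc i) (hcp i) (hcm' i)) /eqP.
  by rewrite -/M (negbTE M0).
split.
- move=> M0 D0 mup mum gp gm.
  have s2 : Num.sqrt (-M) ^+ 2 = -M by rewrite sqr_sqrtr // oppr_ge0 ltW.
  have sp : 0 < Num.sqrt (-M) by rewrite sqrtr_gt0 oppr_gt0.
  have M0' : M != 0 by rewrite (lt_eqF M0).
  have qd : forall s : R, s ^+ 2 = -M ->
      ((q + s) / (q ^+ 2 + M)) ^+ 2 * (M + q ^+ 2) - 2 * ((q + s) / (q ^+ 2 + M)) * q + 1 = 0.
    move=> s hs; have hM : M = - s ^+ 2 by rewrite hs opprK.
    move: D0; rewrite hM => D0; field; exact D0.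
  split.
  + apply: (@gen R f a c gp mb mup (mup * q - 1)) => //.
    * exact: qd.
    * by move=> i; apply: nz.
  + apply: (@gen R f a c gm mb mum (mum * q - 1)) => //.
    * by apply: qd; rewrite sqrrN.
    * by move=> i; apply: nz.
  + move=> i; apply/eqP => E.
    have := congr1 (fun v => lip v mb) E; rewrite /gp /gm /= !lipg.
    rewrite (lipC (pt R) mb) -/q -/M => e.
    have h2 : 2 * Num.sqrt (-M) = (mup * M + (mup * q - 1) * q) - (mum * M + (mum * q - 1) * q).
      rewrite /mup /mum; field; exact D0.
    lra.
- move=> D0 q0.
  have M0 : M != 0.
    apply/eqP => h; move/eqP: D0; rewrite h addr0 sqrf_eq0; exact/negP.
  apply: (@gen R f a c _ mb ((2 * q)^-1) (- 2^-1)) => //.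
  + by move=> i; rewrite scaleNr.
  + rewrite -/q; field; by rewrite ?q0 ?pnatr_eq0.
  + rewrite -/q -/M (addrC M) D0; field; by rewrite ?q0 ?pnatr_eq0.
  + by move=> i; rewrite -scaleNr; apply: nz.
- move=> M0 q0 g.
  have fixk i : sinv (a i) (- (q^-1 *: mb)) = - (q^-1 *: mb).
    by apply: sinv_orth; rewrite lipNl lipZl hAm mulr0 oppr0.
  have inv i : c i = - (q^-1 *: mb) <-> c (i + 1) = - (q^-1 *: mb).
    split => h; first by rewrite -hc h fixk.
    by rewrite -(sinv_inv (c i) (hAA i)) hc h fixk.
  case: (boolP (c 0 == - (q^-1 *: mb))) => [/eqP h0 | h0].
    left; apply: int_ind2 => // i h; [exact: (proj1 (inv i) h) | exact: (proj2 (inv i) h)].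
  right.
  have hnz : forall i, c i != - (q^-1 *: mb).
    apply: int_ind2 => // i hi; apply/eqP => E; move/eqP: hi; apply;
      [exact: (proj2 (inv i) E) | exact: (proj1 (inv i) E)].
  split.
    apply: (@gen R f a c g mb (q^-1) 0) => //.
    + by move=> i; rewrite scale0r addr0.
    + by rewrite -/q mulVf // subrr.
    + rewrite -/q -/M M0 add0r; field; exact q0.
    + by move=> i; rewrite /g addr_eq0.
  move=> i; rewrite /g lipDl lipZl hcm' -/M M0; ring.
Qed.
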